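(* Let $G$ be a digraph. Then $\operatorname{CSP}(G^\bot)$ and $\operatorname{CSP}(G^\top)$ are each equivalent to $\operatorname{CSP}(G)$ under first order reductions.
   Context: Digraphs are finite and loopless. For $G=(V,E)$, $G^\top$ is the digraph on $V\cup\{\top\}$ ($\top\notin V$) with edges $E\cup\{(v,\top):v\in V\}$, and $G^\bot$ is the digraph on $V\cup\{\bot\}$ with edges $E\cup\{(\bot,v):v\in V\}$. $\operatorname{CSP}(H)$ is the problem of deciding whether a finite input digraph admits a homomorphism to $H$. First order reductions are in the sense of descriptive complexity (Immerman): input structures carry a linear order, and the output structure is defined by first order formulas (possibly with distinct parameters) on tuples of elements of the input. *)

(* Defs.v *)
From mathcomp Require Import all_boot.
Set Implicit Arguments. Unset Strict Implicit. Unset Printing Implicit Defensive.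

(** G^top : vertices [option V], [None] is the new vertex top,
    edges E plus (v, top) for every v in V. *)
Definition top_rel (V : Type) (E : rel V) : rel (option V) :=
  fun a b => match a, b with
             | Some u, Some v => E u v
             | Some _, None => true
             | None, _ => false
             end.

(** G^bot : vertices [option V], [None] is the new vertex bot,
    edges E plus (bot, v) for every v in V. *)
Definition bot_rel (V : Type) (E : rel V) : rel (option V) :=
  fun a b => match a, b with
             | Some u, Some v => E u v
             | None, Some _ => true
             | _, None => false
             end.

Definition hom_exists (U W : Type) (EU : U -> U -> Prop) (EW : rel W) : Prop :=
  exists h : U -> W, forall u v, EU u v -> EW (h u) (h v).

Definition inCSP (V : finType) (E : rel V) (A : finType) (EA : rel A) : Prop :=
  hom_exists (fun a b => EA a b) E.

Inductive fo : Type :=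
| FEdge of nat & nat
| FLt of nat & nat
| FEq of nat & nat
| FTrue
| FNot of fo
| FAnd of fo & fo
| FOr of fo & fo
| FEx of nat & fo
| FAll of nat & fo.

Fixpoint fv (phi : fo) : seq nat :=
  match phi with
  | FEdge i j | FLt i j | FEq i j => [:: i; j]
  | FTrue => [::]
  | FNot f => fv f
  | FAnd f g | FOr f g => fv f ++ fv g
  | FEx i f | FAll i f => [seq n <- fv f | n != i]
  end.

Definition upd (A : Type) (rho : nat -> A) (i : nat) (a : A) : nat -> A :=
  fun n => if n == i then a else rho n.

Fixpoint sat (A : Type) (E lt : rel A) (rho : nat -> A) (phi : fo) : Prop :=
  match phi with
  | FEdge i j => E (rho i) (rho j)
  | FLt i j => lt (rho i) (rho j)
  | FEq i j => rho i = rho j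
  | FTrue => True
  | FNot f => ~ sat E lt rho f
  | FAnd f g => sat E lt rho f /\ sat E lt rho g
  | FOr f g => sat E lt rho f \/ sat E lt rho g
  | FEx i f => exists a, sat E lt (upd rho i a) f
  | FAll i f => forall a, sat E lt (upd rho i a) f
  end.

Definition strict_linear_order (A : eqType) (lt : rel A) : Prop :=
  irreflexive lt /\ transitive lt /\ (forall x y : A, x != y -> lt x y || lt y x).

(** Variables 0..k-1 denote the tuple x, k..2k-1 the tuple y and
   2k..2k+p-1 the parameters.  The reduction must be correct
   for every nonempty (witnessed by [a0]) finite loopless digraph A, every
   linear order on A and every choice of pairwise distinct parameters c;
   its output must be a (loopless) digraph.  [a0] only fills variables that
   are not free in the (bounded) formulas and is hence irrelevant. *)
Definition fo_reduction (V1 : finType) (E1 : rel V1) (V2 : finType) (E2 : rel V2) : Prop :=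
  exists (k p : nat) (phiU phiE : fo),
    all (fun n => n < k.*2 + p) (fv phiU) /\
    all (fun n => n < k.*2 + p) (fv phiE) /\
    forall (A : finType) (EA : rel A), irreflexive EA ->
    forall lt : rel A, strict_linear_order lt ->
    forall c : p.-tuple A, uniq c ->
    forall a0 : A,
      let U := {x : k.-tuple A | sat EA lt (fun n => nth a0 (x ++ x ++ c) n) phiU} in
      let EU := fun u v : U => sat EA lt (fun n => nth a0 (proj1_sig u ++ proj1_sig v ++ c) n) phiE in
      (forall u : U, ~ EU u u) /\
      (inCSP E1 EA <-> hom_exists EU E2).

Definition fo_equivalent (V1 : finType) (E1 : rel V1) (V2 : finType) (E2 : rel V2) : Prop :=
  fo_reduction E1 E2 /\ fo_reduction E2 E1.

(* Main.v *)
Require Import Defs.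
From mathcomp Require Import all_boot.
From Stdlib Require Import ClassicalEpsilon.

Lemma mk_fun (U : Type) (V : finType) (f : U -> option V) :
  (forall u, f u <> None) -> exists g : U -> V, forall u, f u = Some (g u).
Proof.
move=> Hf; case: (pickP (@predT V)) => [v0 _|H0].
  exists (fun u => odflt v0 (f u)) => u; move: (Hf u); by case: (f u).
have nU : U -> False.
  move=> u; move: (Hf u); case: (f u) => [v|] //; by have := H0 v.
exists (fun u => False_rect _ (nU u)) => u; exfalso; exact: nU u.
Qed.

Lemma red1 (V : finType) (E : rel V) : fo_reduction (bot_rel E) E.
Proof.
exists 1, 0, (FEx 2 (FEdge 2 0)), (FEdge 0 1).
split; first by []. split; first by [].
move=> A EA Hirr lt _ c _ a0 U EU.
split.
  case=> [[[|x [|]] Hs] Hx] //; rewrite /EU /=; by rewrite Hirr.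
split.
  case=> h Hh.
  have Hf : forall u : U, h (nth a0 (proj1_sig u) 0) <> None.
    case=> [[[|x [|]] Hs] Hx] //=; case: Hx => z Hz; rewrite /upd /= in Hz.
    move: (Hh _ _ Hz); by case: (h z); case: (h x).
  have [g Hg] := @mk_fun _ _ _ Hf; exists g.
  move=> [[[|x [|]] Hs] Hx] // [[[|y [|]] Hs'] Hy] //; rewrite /EU /= => Hxy.
  move: (Hh _ _ Hxy) (Hg (exist _ (Tuple Hs) Hx)) (Hg (exist _ (Tuple Hs') Hy)) => /=.
  move=> H1 Ex Ey; by rewrite Ex Ey in H1.
case=> g Hg.
exists (fun x => match excluded_middle_informative (exists z, EA z x) with
  | left p => Some (g (exist _ (@Tuple 1 A [:: x] erefl) p))
  | right _ => None end).
move=> x y Exy.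
have Hy : exists z, EA z y by exists x.
case: (excluded_middle_informative (exists z, EA z y)) => [py|ny]; last by [].
case: (excluded_middle_informative (exists z, EA z x)) => [px|nx]; last by [].
by apply: Hg.
Qed.

Lemma red3 (V : finType) (E : rel V) : fo_reduction (top_rel E) E.
Proof.
exists 1, 0, (FEx 2 (FEdge 0 2)), (FEdge 0 1).
split; first by []. split; first by [].
move=> A EA Hirr lt _ c _ a0 U EU.
split.
  case=> [[[|x [|]] Hs] Hx] //; rewrite /EU /=; by rewrite Hirr.
split.
  case=> h Hh.
  have Hf : forall u : U, h (nth a0 (proj1_sig u) 0) <> None.
    case=> [[[|x [|]] Hs] Hx] //=; case: Hx => z Hz; rewrite /upd /= in Hz.
    move: (Hh _ _ Hz); by case: (h z); case: (h x).
  have [g Hg] := @mk_fun _ _ _ Hf; exists g.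
  move=> [[[|x [|]] Hs] Hx] // [[[|y [|]] Hs'] Hy] //; rewrite /EU /= => Hxy.
  move: (Hh _ _ Hxy) (Hg (exist _ (Tuple Hs) Hx)) (Hg (exist _ (Tuple Hs') Hy)) => /= H1 Ex Ey; by rewrite Ex Ey in H1.
case=> g Hg.
exists (fun x => match excluded_middle_informative (exists z, EA x z) with
  | left p => Some (g (exist _ (@Tuple 1 A [:: x] erefl) p))
  | right _ => None end).
move=> x y Exy.
have Hx : exists z, EA x z by exists y.
case: (excluded_middle_informative (exists z, EA x z)) => [px|nx]; last by [].
case: (excluded_middle_informative (exists z, EA y z)) => [py|ny]; last by [].
by apply: Hg.
Qed.

Lemma red2 (V : finType) (E : rel V) : fo_reduction E (bot_rel E).
Proof.
exists 2, 2, FTrue,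
  (FOr (FAnd (FEq 1 4) (FAnd (FEq 3 4) (FEdge 0 2)))
       (FAnd (FEq 1 5) (FAnd (FEq 3 4) (FEq 0 2)))).
split; first by []. split; first by [].
move=> A EA Hirr lt _ [[|c1 [|c2 [|]]] Hc] // Hu a0 U EU.
have Hu' : c1 != c2 by move: Hu; rewrite /= inE andbT.
split.
  case=> [[[|x [|y [|]]] Hs] ?] //; rewrite /EU /=.
  move=> [[_ [_ Hxx]]|[e1 [e2 _]]]; first by rewrite Hirr in Hxx.
  by move: Hu'; rewrite -e1 e2 eqxx.
split.
  case=> g Hg.
  exists (fun u : U => if nth a0 (proj1_sig u) 1 == c1
                       then Some (g (nth a0 (proj1_sig u) 0)) else None).
  move=> [[[|x [|y [|]]] Hs] ?] // [[[|x' [|y' [|]]] Hs'] ?] //; rewrite /EU /=.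
  move=> [[-> [-> Hxx]]|[-> [-> ->]]]; first by rewrite eqxx /=; exact: Hg.
  by rewrite eqxx eq_sym (negbTE Hu').
case=> h Hh.
pose ux x := (exist _ (@Tuple 2 A [:: x; c1] erefl) I : U).
pose wx x := (exist _ (@Tuple 2 A [:: x; c2] erefl) I : U).
have Hf : forall x, h (ux x) <> None.
  move=> x; move: (Hh (wx x) (ux x) (or_intror (conj erefl (conj erefl erefl)))).
  by case: (h (wx x)); case: (h (ux x)).
have [g Hg] := @mk_fun _ _ _ Hf; exists g => x y Exy.
move: (Hh (ux x) (ux y) (or_introl (conj erefl (conj erefl Exy)))).
by rewrite !Hg.
Qed.

Lemma red4 (V : finType) (E : rel V) : fo_reduction E (top_rel E).
Proof.
exists 2, 2, FTrue,
  (FOr (FAnd (FEq 1 4) (FAnd (FEq 3 4) (FEdge 0 2)))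
       (FAnd (FEq 1 4) (FAnd (FEq 3 5) (FEq 0 2)))).
split; first by []. split; first by [].
move=> A EA Hirr lt _ [[|c1 [|c2 [|]]] Hc] // Hu a0 U EU.
have Hu' : c1 != c2 by move: Hu; rewrite /= inE andbT.
split.
  case=> [[[|x [|y [|]]] Hs] ?] //; rewrite /EU /=.
  move=> [[_ [_ Hxx]]|[e1 [e2 _]]]; first by rewrite Hirr in Hxx.
  by move: Hu'; rewrite -e1 e2 eqxx.
split.
  case=> g Hg.
  exists (fun u : U => if nth a0 (proj1_sig u) 1 == c1
                       then Some (g (nth a0 (proj1_sig u) 0)) else None).
  move=> [[[|x [|y [|]]] Hs] ?] // [[[|x' [|y' [|]]] Hs'] ?] //; rewrite /EU /=.
  move=> [[-> [-> Hxx]]|[-> [-> ->]]]; first by rewrite eqxx /=; exact: Hg.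
  by rewrite eqxx eq_sym (negbTE Hu').
case=> h Hh.
pose ux x := (exist _ (@Tuple 2 A [:: x; c1] erefl) I : U).
pose wx x := (exist _ (@Tuple 2 A [:: x; c2] erefl) I : U).
have Hf : forall x, h (ux x) <> None.
  move=> x; move: (Hh (ux x) (wx x) (or_intror (conj erefl (conj erefl erefl)))).
  by case: (h (wx x)); case: (h (ux x)).
have [g Hg] := @mk_fun _ _ _ Hf; exists g => x y Exy.
move: (Hh (ux x) (ux y) (or_introl (conj erefl (conj erefl Exy)))).
by rewrite !Hg.
Qed.

Theorem proposition3p2 (V : finType) (E : rel V) (Hloop : irreflexive E) :
  fo_equivalent (bot_rel E) E /\ fo_equivalent (top_rel E) E.
Proof.
split; split; [exact: red1 | exact: red2 | exact: red3 | exact: red4].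
Qed.
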